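(* Let $S\subseteq\{0,1\}^n$ and $f:S\to\{0,1\}$. Then for any $\epsilon<1/2$, $$\mathsf{L}^{\epsilon}(f)\ \ge\ \big((1-2\epsilon)\,\mathsf{sumPI}(f)\big)^2.$$
   Context: For $g:S\to\{0,1\}$ with $S\subseteq\{0,1\}^n$, $\mathsf{L}(g)$ denotes the minimum number of leaves of a formula over $\{\wedge,\vee\}$ with literals $x_i,\neg x_i$ at the leaves that agrees with $g$ on $S$. A function $f:S\to\{0,1\}$ is $\epsilon$-approximated by a set of functions $\{f_j\}_{j\in J}$, $f_j:S\to\{0,1\}$, if there is a probability distribution $\alpha$ on $J$ such that for every $x\in S$, $\Pr_{j\sim\alpha}[f(x)=f_j(x)]\ge 1-\epsilon$. $\mathsf{L}^\epsilon(f)$ is the least $s$ such that $f$ is $\epsilon$-approximated by a set of functions $\{f_j\}$ with $\max_j \mathsf{L}(f_j)\le s$. With $p=\{p_x:x\in S\}$ ranging over families of probability distributions on $[n]$, $$\mathsf{sumPI}(f)=\min_{p}\ \max_{x,y\in S:\ f(x)\neq f(y)} \frac{1}{\sum_{i:\,x_i\neq y_i}\sqrt{p_x(i)p_y(i)}}.$$ *)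

(* Defs.v *)
From HB Require Import structures.
From mathcomp Require Import all_boot all_order all_algebra.
From mathcomp Require Import boolp classical_sets reals.
Set Implicit Arguments. Unset Strict Implicit. Unset Printing Implicit Defensive.
Import Order.TTheory GRing.Theory Num.Theory.
Local Open Scope ring_scope.

Definition bv (n : nat) := {ffun 'I_n -> bool}.

(* De Morgan formulas over {AND, OR} with literals x_i (Lit i true) and
   ~x_i (Lit i false) at the leaves. *)
Inductive formula (n : nat) : Type :=
| Lit of 'I_n & bool
| And of formula n & formula n
| Or of formula n & formula n.

Fixpoint feval n (F : formula n) (x : bv n) : bool :=
  match F with
  | Lit i b => if b then x i else ~~ x i
  | And F1 F2 => feval F1 x && feval F2 x
  | Or F1 F2 => feval F1 x || feval F2 x
  end.

Fixpoint leaves n (F : formula n) : nat :=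
  match F with
  | Lit _ _ => 1
  | And F1 F2 => leaves F1 + leaves F2
  | Or F1 F2 => leaves F1 + leaves F2
  end.

(* A function S -> {0,1} is represented by g : bv n -> bool; only its values
   on S are ever used. *)
Definition agrees_on n (S : {set bv n}) (F : formula n) (g : bv n -> bool) :=
  forall x, x \in S -> feval F x = g x.

(* isL S g k  <->  L(g) = k : the minimum number of leaves of a formula
   agreeing with g on S is k. *)
Definition isL n (S : {set bv n}) (g : bv n -> bool) (k : nat) : Prop :=
  (exists F : formula n, agrees_on S F g /\ leaves F = k) /\
  (forall F : formula n, agrees_on S F g -> (k <= leaves F)%N).

Definition eps_approx {R : realType} n (S : {set bv n}) (f : bv n -> bool)
  (eps : R) (J : finType) (fam : J -> bv n -> bool) : Prop :=
  exists alpha : J -> R,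
    (forall j, 0 <= alpha j) /\ \sum_(j : J) alpha j = 1 /\
    (forall x, x \in S -> 1 - eps <= \sum_(j : J | f x == fam j x) alpha j).

Definition approx_by_size {R : realType} n (S : {set bv n}) (f : bv n -> bool)
  (eps : R) (s : nat) : Prop :=
  exists (J : finType) (fam : J -> bv n -> bool),
    eps_approx S f eps fam /\
    (forall j, exists t, isL S (fam j) t /\ (t <= s)%N).

(* isLeps S f eps s  <->  L^eps(f) = s (the least such s). *)
Definition isLeps {R : realType} n (S : {set bv n}) (f : bv n -> bool)
  (eps : R) (s : nat) : Prop :=
  approx_by_size S f eps s /\
  (forall s', approx_by_size S f eps s' -> (s <= s')%N).

Definition distr_family {R : realType} n (S : {set bv n}) (p : bv n -> 'I_n -> R) :=
  forall x, x \in S -> (forall i, 0 <= p x i) /\ \sum_(i < n) p x i = 1.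

Definition overlap (R : realType) n (p : bv n -> 'I_n -> R) (x y : bv n) : R :=
  \sum_(i < n | x i != y i) Num.sqrt (p x i * p y i).

(* v is >= max_{x,y in S, f x <> f y} 1/overlap p x y  (with 1/0 = +infinity). *)
Definition PI_bound {R : realType} n (S : {set bv n}) (f : bv n -> bool)
  (p : bv n -> 'I_n -> R) (v : R) : Prop :=
  forall x y, x \in S -> y \in S -> f x != f y -> 1 <= v * overlap p x y.

(* sumPI(f) = min_p max_{x,y} 1/overlap = inf of the values v that bound the
   inner max for some family p. *)
Definition sumPI {R : realType} n (S : {set bv n}) (f : bv n -> bool) : R :=
  inf [set v : R | exists p, distr_family S p /\ PI_bound S f p v].

(* Main.v *)
Require Import Defs.
From HB Require Import structures.
From mathcomp Require Import all_boot all_order all_algebra.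
From mathcomp Require Import boolp classical_sets reals.
From mathcomp Require Import ring lra.
Import Order.TTheory GRing.Theory Num.Theory.
Local Open Scope ring_scope.

Section Aux.
Variable R : realType.

Lemma overlap_sym n (p : bv n -> 'I_n -> R) x y : overlap p x y = overlap p y x.
Proof. by rewrite /overlap; apply: eq_big => [i|i _]; [by rewrite eq_sym | by rewrite mulrC]. Qed.

Lemma overlap_ge0 n (p : bv n -> 'I_n -> R) x y : 0 <= overlap p x y.
Proof. by apply: sumr_ge0 => i _; exact: sqrtr_ge0. Qed.

Lemma ov_mono n (p q : bv n -> 'I_n -> R) x y c : 0 <= c ->
  (forall i, c * (q x i * q y i) <= p x i * p y i) ->
  Num.sqrt c * overlap q x y <= overlap p x y.
Proof.
move=> c0 H; rewrite /overlap mulr_sumr; apply: ler_sum => i _.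
by rewrite -sqrtrM // ler_wsqrtr.
Qed.

Lemma leaves_gt0 n (F : formula n) : (0 < leaves F)%N.
Proof. by elim: F => //= F1 IH1 F2 IH2; rewrite addn_gt0 IH1. Qed.

Lemma sqrt_split (a b : nat) : (0 < a)%N ->
  Num.sqrt (a + b)%:R * Num.sqrt (a%:R / (a + b)%:R) = Num.sqrt (a%:R : R).
Proof.
move=> a0; rewrite -sqrtrM ?ler0n //; congr Num.sqrt.
rewrite mulrC -mulrA mulVf ?mulr1 //.
by rewrite pnatr_eq0 -lt0n addn_gt0 a0.
Qed.

Definition dist n (p : bv n -> 'I_n -> R) :=
  (forall x i, 0 <= p x i) /\ (forall x, \sum_i p x i = 1).
Arguments dist {n}.

Lemma combine n (G H : formula n) (F : bv n -> bool) (m : bool)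
  (hF : forall x, (F x == m) = ((feval G x == m) && (feval H x == m)))
  (pG pH : bv n -> 'I_n -> R) : dist pG -> dist pH ->
  (forall x y, feval G x != feval G y -> 1 <= Num.sqrt (leaves G)%:R * overlap pG x y) ->
  (forall x y, feval H x != feval H y -> 1 <= Num.sqrt (leaves H)%:R * overlap pH x y) ->
  exists p, dist p /\ (forall x y, F x != F y ->
     1 <= Num.sqrt (leaves G + leaves H)%:R * overlap p x y).
Proof.
move=> [pG0 pG1] [pH0 pH1] IG IH.
set a := leaves G; set b := leaves H.
have a0 : (0 < a)%N by exact: leaves_gt0.
have b0 : (0 < b)%N by exact: leaves_gt0.
set L := (a + b)%N.
have L0 : (0 : R) < L%:R by rewrite ltr0n addn_gt0 a0.
set la : R := a%:R / L%:R; set lb : R := b%:R / L%:R.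
have la0 : 0 <= la by rewrite divr_ge0 ?ler0n.
have lb0 : 0 <= lb by rewrite divr_ge0 ?ler0n.
have lab : la + lb = 1 by rewrite /la /lb -mulrDl -natrD divff // gt_eqF.
pose p x := if F x == m then (fun i => la * pG x i + lb * pH x i)
            else if feval G x != m then pG x else pH x.
exists p; split.
  split.
    move=> x i; rewrite /p; case: ifP => _; last by case: ifP.
    by rewrite addr_ge0 // mulr_ge0.
  move=> x; rewrite /p; case: ifP => _; last by case: ifP.
  by rewrite big_split /= -!mulr_sumr pG1 pH1 !mulr1.
have key : forall x y, F x == m -> F y != m ->
    1 <= Num.sqrt L%:R * overlap p x y.
  move=> x y Fx Fy.
  move: (Fx) (Fy); rewrite !hF => /andP [/eqP Gx /eqP Hx].
  have px : p x = (fun i => la * pG x i + lb * pH x i) by rewrite /p Fx.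
  case: (boolP (feval G y != m)) => Gy _.
  - have py : p y = pG y by rewrite /p (negbTE Fy) Gy.
    have h1 : feval G x != feval G y by rewrite Gx eq_sym.
    have {}h1 := IG x y h1.
    have h2 : Num.sqrt la * overlap pG x y <= overlap p x y.
      apply: ov_mono => // i; rewrite px py mulrA.
      by apply: ler_wpM2r; [exact: pG0 | rewrite lerDl mulr_ge0].
    apply: (le_trans h1); rewrite -(sqrt_split a b a0) -/L -/la -mulrA.
    by rewrite ler_wpM2l ?sqrtr_ge0.
  - move: Gy => /negPn Gy.
    have Hy : feval H y != m by move: Fy; rewrite hF Gy.
    have py : p y = pH y by rewrite /p (negbTE Fy) Gy.
    have h1 : feval H x != feval H y by rewrite Hx eq_sym.
    have {}h1 := IH x y h1.
    have h2 : Num.sqrt lb * overlap pH x y <= overlap p x y.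
      apply: ov_mono => // i; rewrite px py mulrA.
      by apply: ler_wpM2r; [exact: pH0 | rewrite lerDr mulr_ge0].
    apply: (le_trans h1); rewrite -(sqrt_split b a b0) addnC -/L -/lb -mulrA.
    by rewrite ler_wpM2l ?sqrtr_ge0.
move=> x y Fxy.
case: (boolP (F x == m)) => Fx.
  apply: key => //; rewrite (eqP Fx) in Fxy.
  by apply: contra Fxy => /eqP ->.
have Fy : F y == m.
  by move: Fxy Fx; case: (F x); case: (F y); case: (m).
by rewrite overlap_sym; apply: key.
Qed.


Lemma formula_p n (F : formula n) : exists p : bv n -> 'I_n -> R, dist p /\
  (forall x y, feval F x != feval F y ->
     1 <= Num.sqrt (leaves F)%:R * overlap p x y).
Proof.
elim: F => [i b | G IG H IH | G IG H IH].
- exists (fun _ j => (j == i)%:R); split.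
    split; first by move=> x j; rewrite ler0n.
    by move=> x; rewrite (bigD1 i) //= eqxx big1 ?addr0 // => j /negbTE ->.
  move=> x y /= hxy.
  have xy : x i != y i by move: hxy; case: (b); case: (x i); case: (y i).
  rewrite sqrtr1 mul1r /overlap (bigD1 i) //= eqxx mulr1 sqrtr1 lerDl.
  by apply: sumr_ge0 => j _; exact: sqrtr_ge0.
- have [pG [dG hG]] := IG; have [pH [dH hH]] := IH.
  apply: (@combine n G H (feval (And G H)) true _ pG pH dG dH hG hH).
  by move=> x /=; case: (feval G x); case: (feval H x).
- have [pG [dG hG]] := IG; have [pH [dH hH]] := IH.
  apply: (@combine n G H (feval (Or G H)) false _ pG pH dG dH hG hH).
  by move=> x /=; case: (feval G x); case: (feval H x).
Qed.

Lemma cs_abcd (a b c d : R) : 0 <= a -> 0 <= b -> 0 <= c -> 0 <= d ->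
  a * c + b * d <= Num.sqrt ((a ^+ 2 + b ^+ 2) * (c ^+ 2 + d ^+ 2)).
Proof.
move=> a0 b0 c0 d0.
have h : 0 <= a * c + b * d by rewrite addr_ge0 ?mulr_ge0.
rewrite -[X in X <= _](ger0_norm h) -sqrtr_sqr ler_wsqrtr //.
have e : (a ^+ 2 + b ^+ 2) * (c ^+ 2 + d ^+ 2) - (a * c + b * d) ^+ 2
   = (a * d - b * c) ^+ 2 by ring.
by rewrite -subr_ge0 e sqr_ge0.
Qed.

Lemma cs2 (u v w z : R) : 0 <= u -> 0 <= v -> 0 <= w -> 0 <= z ->
  Num.sqrt (u * w) + Num.sqrt (v * z) <= Num.sqrt ((u + v) * (w + z)).
Proof.
move=> u0 v0 w0 z0.
have := @cs_abcd _ _ _ _ (sqrtr_ge0 u) (sqrtr_ge0 v) (sqrtr_ge0 w) (sqrtr_ge0 z).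
by rewrite !sqr_sqrtr // -!sqrtrM.
Qed.

Lemma cs_seq (J : Type) (r : seq J) (a b : J -> R) :
  (forall j, 0 <= a j) -> (forall j, 0 <= b j) ->
  \sum_(j <- r) Num.sqrt (a j * b j) <=
  Num.sqrt ((\sum_(j <- r) a j) * (\sum_(j <- r) b j)).
Proof.
move=> a0 b0; elim: r => [|j r IHr]; first by rewrite !big_nil mul0r sqrtr0.
have A0 : 0 <= \sum_(k <- r) a k by apply: sumr_ge0.
have B0 : 0 <= \sum_(k <- r) b k by apply: sumr_ge0.
rewrite !big_cons; apply: le_trans (@cs2 _ _ _ _ (a0 j) A0 (b0 j) B0).
by rewrite lerD2l.
Qed.

End Aux.
Arguments dist {R n}.

Theorem mainTheorem2 (R : realType) (n : nat) (S : {set bv n})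
  (f : bv n -> bool) (eps : R) :
  eps < 1 / 2 ->
  forall s : nat, isLeps S f eps s ->
  ((1 - 2 * eps) * sumPI S f) ^+ 2 <= s%:R.
Proof.
move=> heps s [[J [fam [[alpha [al0 [al1 alS]]] hj]]] _].
have hp : forall j, exists pj : bv n -> 'I_n -> R, dist pj /\
    (forall x y, x \in S -> y \in S -> fam j x != fam j y ->
       1 <= Num.sqrt s%:R * overlap pj x y).
  move=> j; have [t [[[F [agF lF]] _] ts]] := hj j.
  have [pj [dj hpj]] := formula_p R n F.
  exists pj; split => // x y xS yS fxy.
  rewrite -(agF x xS) -(agF y yS) in fxy.
  apply: (le_trans (hpj x y fxy)); apply: ler_wpM2r; first exact: overlap_ge0.
  by rewrite ler_wsqrtr // ler_nat lF.
have [P hP] := choice hp.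
pose Q x i := \sum_j alpha j * P j x i.
have dQ : dist Q.
  split.
    move=> x i; apply: sumr_ge0 => j _; apply: mulr_ge0 => //.
    by case: (hP j) => [[h _] _]; exact: h.
  move=> x; rewrite /Q exchange_big /= -al1; apply: eq_bigr => j _.
  by rewrite -mulr_sumr; case: (hP j) => [[_ ->] _]; rewrite mulr1.
have P0 : forall j x i, 0 <= P j x i by move=> j x i; case: (hP j) => [[h _] _].
have c0 : 0 < 1 - 2 * eps by lra.
have key : forall x y, x \in S -> y \in S -> f x != f y ->
    1 - 2 * eps <= Num.sqrt s%:R * overlap Q x y.
  move=> x y xS yS fxy.
  have h1 : overlap Q x y >= \sum_j alpha j * overlap (P j) x y.
    rewrite /overlap.
    under eq_bigr do rewrite mulr_sumr.
    rewrite exchange_big /=; apply: ler_sum => i _.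
    have cs := @cs_seq R J (index_enum J) (fun j => alpha j * P j x i)
      (fun j => alpha j * P j y i) (fun j => mulr_ge0 (al0 j) (P0 j x i))
      (fun j => mulr_ge0 (al0 j) (P0 j y i)).
    apply: le_trans cs.
    apply: ler_sum => j _.
    have e : forall c u w : R, 0 <= c -> Num.sqrt (c * u * (c * w)) = c * Num.sqrt (u * w).
      move=> c u w cp; rewrite mulrACA sqrtrM ?mulr_ge0 //.
      by rewrite -expr2 sqrtr_sqr ger0_norm.
    by rewrite e.
  have h2 : \sum_j alpha j * ((f x == fam j x)%:R + (f y == fam j y)%:R - 1)
      <= Num.sqrt s%:R * \sum_j alpha j * overlap (P j) x y.
    rewrite mulr_sumr; apply: ler_sum => j _.
    rewrite mulrCA; apply: ler_wpM2l => //.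
    case: (boolP (fam j x != fam j y)) => g.
      have := (hP j).2 x y xS yS g.
      case: (f x == fam j x); case: (f y == fam j y) => /=; lra.
    have hx := @overlap_ge0 R n (P j) x y.
    have hs := sqrtr_ge0 (s%:R : R).
    have hm : 0 <= Num.sqrt s%:R * overlap (P j) x y by rewrite mulr_ge0.
    move/negPn/eqP: g => g.
    case: (boolP (f x == fam j x)) => /= ex; case: (boolP (f y == fam j y)) => /= ey; try lra.
    by move: fxy; rewrite (eqP ex) (eqP ey) g eqxx.
  have h3 : \sum_j alpha j * ((f x == fam j x)%:R + (f y == fam j y)%:R - 1)
      = \sum_(j | f x == fam j x) alpha j + \sum_(j | f y == fam j y) alpha j - 1.
    rewrite -[X in _ = _ - X]al1 [X in _ = X + _ - _]big_mkcond.
    rewrite [X in _ = _ + X - _]big_mkcond -big_split -sumrB /=.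
    apply: eq_bigr => j _.
    by case: (f x == fam j x); case: (f y == fam j y); rewrite /= ?mulr1 ?mulr0; ring.
  have ax := alS x xS; have ay := alS y yS.
  apply: le_trans (le_trans h2 _); first by rewrite h3; lra.
  by apply: ler_wpM2l; [exact: sqrtr_ge0 | exact: h1].
rewrite /sumPI; match goal with |- context [inf ?X] => set E := X end.
set v := Num.sqrt s%:R / (1 - 2 * eps).
have vE : E v.
  exists Q; split; first by move=> x _; split; [exact: dQ.1 | exact: dQ.2].
  move=> x y xS yS fxy; rewrite /v mulrAC ler_pdivlMr // mul1r.
  exact: key.
have [[x0 [y0 [xS [yS fxy]]]] | nop] :=
   pselect (exists x y, x \in S /\ y \in S /\ f x != f y).
  have lb0 : lbound E 0.
    move=> w [p [_ hpw]]; have := hpw x0 y0 xS yS fxy.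
    have := @overlap_ge0 R n p x0 y0; nra.
  have i0 : 0 <= inf E by apply: lb_le_inf; [exists v | ].
  have iv : inf E <= v by apply: ge_inf => //; exists 0.
  have h : (1 - 2 * eps) * inf E <= Num.sqrt s%:R.
    have -> : Num.sqrt s%:R = (1 - 2 * eps) * v.
      by rewrite /v mulrC -mulrA mulVf ?mulr1 // gt_eqF.
    by rewrite ler_wpM2l // ltW.
  have hm : 0 <= (1 - 2 * eps) * inf E by rewrite mulr_ge0 // ltW.
  rewrite -(sqr_sqrtr (ler0n R s)).
  have hs := sqrtr_ge0 (s%:R : R).
  nra.
have allE : forall w, E w.
  move=> w; exists Q; split; first by move=> x _; split; [exact: dQ.1 | exact: dQ.2].
  move=> x y xS yS fxy; exfalso; apply: nop; exists x, y; split => //.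
rewrite inf_out ?mulr0 ?expr0n ?ler0n //=.
move=> [_ [l hl]]; have := hl (l - 1) (allE _); lra.
Qed.
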